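(* Let $n \ge 3$, let $u_1,u_2 \in M_n(\mathbb C)$ be unitaries such that $\{1_n, u_1^*u_2, u_2^*u_1\}$ is linearly independent, let $0<t<1$, and define $\Phi\colon M_n(\mathbb C)\to M_n(\mathbb C)$ by $\Phi(x) = t\,u_1xu_1^* + (1-t)\,u_2xu_2^*$. Then for every integer $k \ge 2$, $\Phi$ is $k$-noisy if and only if $t \in k^{-1}\mathbb Z$. In particular, if $t$ is irrational, $\Phi$ is a mixture of unitaries that is not $k$-noisy for any $k\ge 2$.
   Context: A linear map $\Phi\colon M_n(\mathbb C)\to M_n(\mathbb C)$ is factorizable with ancilla $(\mathcal A,\tau)$ if $(\mathcal A,\tau)$ is a von Neumann algebra with a normal faithful tracial state $\tau$ and there is a unitary $u \in M_n(\mathbb C)\otimes \mathcal A$ with $\Phi(x) = (\mathrm{id}_n\otimes\tau)(u(x\otimes 1_{\mathcal A})u^* )$ for all $x\in M_n(\mathbb C)$. $\Phi$ is called $k$-noisy if it is factorizable with ancilla $(M_k(\mathbb C),\mathrm{tr}_k)$, where $\mathrm{tr}_k$ is the normalized trace. *)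

(* Defs.v *)
From HB Require Import structures.
From mathcomp Require Import all_boot all_order all_algebra.
From mathcomp Require Import reals.
From mathcomp Require Import complex mxtens.

Set Implicit Arguments.
Unset Strict Implicit.
Unset Printing Implicit Defensive.

Import Order.TTheory GRing.Theory Num.Theory.
Local Open Scope ring_scope.

Definition adjmx (R : realType) (m n : nat) (A : 'M[R[i]]_(m, n)) : 'M[R[i]]_(n, m) :=
  (map_mx (@conjc R) A)^T.

Definition unitary_mx (R : realType) (n : nat) (u : 'M[R[i]]_n) : Prop :=
  u *m adjmx u = 1%:M /\ adjmx u *m u = 1%:M.

(* (id_n (x) tr_k) : M_n (x) M_k -> M_n, with tr_k the normalized trace,
   where M_n (x) M_k is identified with M_{n*k} via the Kronecker product
   (tensmx) indexing convention mxtens_index. *)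
Definition ptrace_norm (R : realType) (n k : nat) (Y : 'M[R[i]]_(n * k)) : 'M[R[i]]_n :=
  \matrix_(i < n, j < n)
     (k%:R^-1 * \sum_(a < k) Y (mxtens_index (i, a)) (mxtens_index (j, a))).

Arguments ptrace_norm {R n} k Y.

(* Phi is k-noisy: factorizable with ancilla (M_k(C), tr_k). *)
Definition k_noisy (R : realType) (n k : nat) (Phi : 'M[R[i]]_n -> 'M[R[i]]_n) : Prop :=
  exists U : 'M[R[i]]_(n * k),
    unitary_mx U /\
    forall x : 'M[R[i]]_n,
      Phi x = ptrace_norm k (U *m (x *t (1%:M : 'M[R[i]]_k)) *m adjmx U).

(* Main.v *)
Require Import Defs.
From HB Require Import structures.
From mathcomp Require Import all_boot all_order all_algebra.
From mathcomp Require Import reals.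
From mathcomp Require Import complex mxtens vector.

Import Order.TTheory GRing.Theory Num.Theory.
Local Open Scope ring_scope.

Section Helpers.
Variable R : realType.
Local Notation C := (R[i]).

Lemma sum_tens n k (F : 'I_(n*k) -> C) :
  \sum_p F p = \sum_(j < n) \sum_(b < k) F (mxtens_index (j, b)).
Proof.
rewrite (reindex (@mxtens_index n k)) /=; last first.
  by exists (@mxtens_unindex n k) => x _; [apply: mxtens_indexK | apply: mxtens_unindexK].
by rewrite pair_big /=; apply: eq_bigr => -[].
Qed.

Lemma sum_delta k (F : 'I_k -> C) (c : 'I_k) :
  \sum_(b < k) F b * (1 *+ (b == c)) = F c.
Proof.
rewrite (bigD1 c) //= eqxx mulr1n mulr1 big1 ?addr0 // => b /negbTE ->.
by rewrite mulr0n mulr0.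
Qed.

Lemma sum_delta' k (F : 'I_k -> C) (c : 'I_k) :
  \sum_(b < k) F b * (1 *+ (c == b)) = F c.
Proof. by rewrite -(@sum_delta k F c); apply: eq_bigr => b _; rewrite eq_sym. Qed.

Lemma tensmxDl m n p q (A B : 'M[C]_(m,n)) (M : 'M[C]_(p,q)) :
  (A + B) *t M = A *t M + B *t M.
Proof.
apply/matrixP => i j; case: (mxtens_indexP i) => i0 i1; case: (mxtens_indexP j) => j0 j1.
by rewrite !mxE !mxtens_indexK /= ?mxE mulrDl.
Qed.

Lemma tensmxDr m n p q (A : 'M[C]_(m,n)) (M N : 'M[C]_(p,q)) :
  A *t (M + N) = A *t M + A *t N.
Proof.
apply/matrixP => i j; case: (mxtens_indexP i) => i0 i1; case: (mxtens_indexP j) => j0 j1.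
by rewrite !mxE !mxtens_indexK /= ?mxE mulrDr.
Qed.

Lemma tensmxZl m n p q (a : C) (A : 'M[C]_(m,n)) (M : 'M[C]_(p,q)) :
  (a *: A) *t M = a *: (A *t M).
Proof.
apply/matrixP => i j; case: (mxtens_indexP i) => i0 i1; case: (mxtens_indexP j) => j0 j1.
by rewrite !mxE !mxtens_indexK /= ?mxE mulrA.
Qed.

Lemma tensmxZr m n p q (a : C) (A : 'M[C]_(m,n)) (M : 'M[C]_(p,q)) :
  A *t (a *: M) = a *: (A *t M).
Proof.
apply/matrixP => i j; case: (mxtens_indexP i) => i0 i1; case: (mxtens_indexP j) => j0 j1.
by rewrite !mxE !mxtens_indexK /= ?mxE mulrCA.
Qed.

Lemma tensmxNr m n p q (A : 'M[C]_(m,n)) (M : 'M[C]_(p,q)) :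
  A *t (- M) = - (A *t M).
Proof. by rewrite -scaleN1r tensmxZr scaleN1r. Qed.

Lemma tens11 n k : (1%:M : 'M[C]_n) *t (1%:M : 'M[C]_k) = 1%:M.
Proof.
apply/matrixP => i j; case: (mxtens_indexP i) => i0 i1; case: (mxtens_indexP j) => j0 j1.
rewrite tensmxE !mxE (inj_eq (can_inj (@mxtens_indexK n k))) xpair_eqE.
by case: eqP; case: eqP => _ _ /=; rewrite ?mulr1n ?mulr0n ?mulr1 ?mulr0.
Qed.

Lemma tensmx_entry m n p q (A : 'M[C]_(m,n)) (B : 'M[C]_(p,q)) i j k l :
  (A *t B) (mxtens_index (i, j)) (mxtens_index (k, l)) = A i k * B j l.
Proof. exact: tensmxE. Qed.

Lemma adjmxE m n (A : 'M[C]_(m,n)) i j : adjmx A i j = conjc (A j i).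
Proof. by rewrite !mxE. Qed.

Lemma adjmxD m n (A B : 'M[C]_(m,n)) : adjmx (A + B) = adjmx A + adjmx B.
Proof. by apply/matrixP => i j; rewrite !mxE rmorphD. Qed.

Lemma adjmxN m n (A : 'M[C]_(m,n)) : adjmx (- A) = - adjmx A.
Proof. by apply/matrixP => i j; rewrite !mxE rmorphN. Qed.

Lemma adjmxB m n (A B : 'M[C]_(m,n)) : adjmx (A - B) = adjmx A - adjmx B.
Proof. by rewrite adjmxD adjmxN. Qed.

Lemma adjmxZ m n a (A : 'M[C]_(m,n)) : adjmx (a *: A) = conjc a *: adjmx A.
Proof. by apply/matrixP => i j; rewrite !mxE rmorphM. Qed.

Lemma adjmxM m n p (A : 'M[C]_(m,n)) (B : 'M[C]_(n,p)) :
  adjmx (A *m B) = adjmx B *m adjmx A.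
Proof. by rewrite /adjmx map_mxM trmx_mul. Qed.

Lemma adjmxK m n (A : 'M[C]_(m,n)) : adjmx (adjmx A) = A.
Proof. by apply/matrixP => i j; rewrite !mxE conjcK. Qed.

Lemma adjmx1 n : adjmx (1%:M : 'M[C]_n) = 1%:M.
Proof. by apply/matrixP => i j; rewrite !mxE eq_sym; case: eqP; rewrite ?mulr1n ?mulr0n ?conjc1 ?conjc0. Qed.

Lemma adjmx_tens m n p q (A : 'M[C]_(m,n)) (B : 'M[C]_(p,q)) :
  adjmx (A *t B) = adjmx A *t adjmx B.
Proof.
apply/matrixP => i j; case: (mxtens_indexP i) => i0 i1; case: (mxtens_indexP j) => j0 j1.
by rewrite !mxE !mxtens_indexK /= rmorphM.
Qed.

End Helpers.
Set Implicit Arguments. Unset Strict Implicit.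

Section Helpers2.
Variable R : realType.
Local Notation C := (R[i]).

Lemma cjM (x y : C) : conjc (x * y) = conjc x * conjc y. Proof. exact: rmorphM. Qed.
Lemma cjD (x y : C) : conjc (x + y) = conjc x + conjc y. Proof. exact: rmorphD. Qed.
Lemma cjN (x : C) : conjc (- x) = - conjc x. Proof. exact: rmorphN. Qed.
Lemma cjB (x y : C) : conjc (x - y) = conjc x - conjc y. Proof. exact: rmorphB. Qed.
Lemma cj1 : conjc (1 : C) = 1. Proof. exact: rmorph1. Qed.
Lemma cj0 : conjc (0 : C) = 0. Proof. exact: rmorph0. Qed.
Lemma cjV (x : C) : conjc (x^-1) = (conjc x)^-1. Proof. exact: fmorphV. Qed.
Lemma cj_nat m : conjc (m%:R : C) = m%:R. Proof. exact: rmorph_nat. Qed.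
Lemma cj_sum (I : Type) (r : seq I) (P : pred I) (F : I -> C) :
  conjc (\sum_(i <- r | P i) F i) = \sum_(i <- r | P i) conjc (F i).
Proof. exact: rmorph_sum. Qed.

Definition ip n (X Y : 'M[C]_n) : C := \tr (adjmx X *m Y).

Lemma ipE n (X Y : 'M[C]_n) : ip X Y = \sum_i \sum_j conjc (X i j) * Y i j.
Proof.
rewrite /ip /mxtrace exchange_big /=; apply: eq_bigr => j _; rewrite !mxE.
by apply: eq_bigr => i _; rewrite !mxE.
Qed.

Lemma ipDr n (X Y Z : 'M[C]_n) : ip X (Y + Z) = ip X Y + ip X Z.
Proof. by rewrite /ip mulmxDr mxtraceD. Qed.
Lemma ipZr n a (X Y : 'M[C]_n) : ip X (a *: Y) = a * ip X Y.
Proof. by rewrite /ip -scalemxAr mxtraceZ. Qed.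
Lemma ipNr n (X Y : 'M[C]_n) : ip X (- Y) = - ip X Y.
Proof. by rewrite -scaleN1r ipZr mulN1r. Qed.
Lemma ipBr n (X Y Z : 'M[C]_n) : ip X (Y - Z) = ip X Y - ip X Z.
Proof. by rewrite ipDr ipNr. Qed.
Lemma ipDl n (X Y Z : 'M[C]_n) : ip (Y + Z) X = ip Y X + ip Z X.
Proof. by rewrite /ip adjmxD mulmxDl mxtraceD. Qed.
Lemma ipZl n a (X Y : 'M[C]_n) : ip (a *: Y) X = conjc a * ip Y X.
Proof. by rewrite /ip adjmxZ -scalemxAl mxtraceZ. Qed.
Lemma ipNl n (X Y : 'M[C]_n) : ip (- Y) X = - ip Y X.
Proof. by rewrite -scaleN1r ipZl cjN cj1 mulN1r. Qed.
Lemma ipBl n (X Y Z : 'M[C]_n) : ip (Y - Z) X = ip Y X - ip Z X.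
Proof. by rewrite ipDl ipNl. Qed.

Lemma ipC n (X Y : 'M[C]_n) : ip Y X = conjc (ip X Y).
Proof.
rewrite !ipE cj_sum; apply: eq_bigr => i _; rewrite cj_sum.
by apply: eq_bigr => j _; rewrite cjM conjcK mulrC.
Qed.

Lemma normc_ge0 (x : C) : 0 <= conjc x * x.
Proof. by rewrite mulrC; apply: mulcJ_ge0. Qed.

Lemma normc_eq0 (x : C) : conjc x * x = 0 -> x = 0.
Proof. by move/eqP; rewrite mulf_eq0 conjc_eq0 orbb => /eqP. Qed.

Lemma ip_eq0 n (X : 'M[C]_n) : ip X X = 0 -> X = 0.
Proof.
rewrite ipE => H; apply/matrixP => i j; rewrite mxE; apply: normc_eq0.
have H1 := psumr_eq0P (fun i _ => sumr_ge0 _ (fun j _ => normc_ge0 (X i j))) H.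
exact: (psumr_eq0P (fun j _ => normc_ge0 (X i j)) (H1 i isT)).
Qed.

Lemma mul_delta_entry n (L M : 'M[C]_n) j l i k :
  (L *m delta_mx j l *m M) i k = L i j * M l k.
Proof.
rewrite -[delta_mx j l](@mul_delta_mx _ n 1 n 0 j l) mulmxA -colE -mulmxA -rowE.
by rewrite !mxE big_ord1 !mxE.
Qed.

Definition Qf n (F : 'M[C]_n -> 'M[C]_n) (Y : 'M[C]_n) : C :=
  \sum_i \sum_j \sum_k \sum_l conjc (Y i j) * Y k l * F (delta_mx j l) i k.

Lemma Qf_ext n (F G : 'M[C]_n -> 'M[C]_n) Y :
  (forall x, F x = G x) -> Qf F Y = Qf G Y.
Proof. by move=> FG; rewrite /Qf; under eq_bigr do under eq_bigr do under eq_bigr do under eq_bigr do rewrite FG. Qed.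

Lemma QfD n (F G : 'M[C]_n -> 'M[C]_n) Y :
  Qf (fun x => F x + G x) Y = Qf F Y + Qf G Y.
Proof.
rewrite /Qf -big_split; apply: eq_bigr => i _; rewrite -big_split; apply: eq_bigr => j _.
rewrite -big_split; apply: eq_bigr => k _; rewrite -big_split; apply: eq_bigr => l _.
by rewrite mxE mulrDr.
Qed.

Lemma QfZ n a (F : 'M[C]_n -> 'M[C]_n) Y :
  Qf (fun x => a *: F x) Y = a * Qf F Y.
Proof.
rewrite /Qf mulr_sumr; apply: eq_bigr => i _; rewrite mulr_sumr; apply: eq_bigr => j _.
rewrite mulr_sumr; apply: eq_bigr => k _; rewrite mulr_sumr; apply: eq_bigr => l _.
by rewrite mxE mulrCA.
Qed.

Lemma Qf0 n (Y : 'M[C]_n) : Qf (fun _ => 0) Y = 0.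
Proof.
rewrite /Qf big1 // => i _; rewrite big1 // => j _; rewrite big1 // => k _.
by rewrite big1 // => l _; rewrite mxE mulr0.
Qed.

Lemma Qf_sum n (I : Type) (r : seq I) (F : I -> 'M[C]_n -> 'M[C]_n) Y :
  Qf (fun x => \sum_(a <- r) F a x) Y = \sum_(a <- r) Qf (F a) Y.
Proof.
elim: r => [|a r IH].
  by rewrite big_nil -(Qf0 Y); apply: Qf_ext => x; rewrite big_nil.
rewrite big_cons -IH -QfD; apply: Qf_ext => x; by rewrite big_cons.
Qed.

Lemma QfL n (L Y : 'M[C]_n) :
  Qf (fun x => L *m x *m adjmx L) Y = ip Y L * conjc (ip Y L).
Proof.
rewrite /Qf !ipE cj_sum big_distrl /=; apply: eq_bigr => i _.
rewrite big_distrl /=; apply: eq_bigr => j _; rewrite big_distrr /=.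
apply: eq_bigr => k _; rewrite cj_sum big_distrr /=; apply: eq_bigr => l _.
rewrite mul_delta_entry !mxE cjM conjcK.
by rewrite -!mulrA; congr (_ * _); rewrite mulrCA.
Qed.

Definition Kab n k (U : 'M[C]_(n * k)) (a b : 'I_k) : 'M[C]_n :=
  \matrix_(i, j) U (mxtens_index (i, a)) (mxtens_index (j, b)).

Lemma ptrace_conj n k (U : 'M[C]_(n * k)) (x : 'M[C]_n) :
  ptrace_norm k (U *m (x *t (1%:M : 'M[C]_k)) *m adjmx U) =
  k%:R^-1 *: \sum_(a < k) \sum_(b < k) Kab U a b *m x *m adjmx (Kab U a b).
Proof.
apply/matrixP => i i'; rewrite !mxE; congr (_ * _).
rewrite summxE; apply: eq_bigr => a _; rewrite summxE.
rewrite [LHS]mxE sum_tens.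
transitivity (\sum_(b < k) \sum_(l < n) (\sum_(j < n) U (mxtens_index (i, a)) (mxtens_index (j, b)) * x j l) * conjc (U (mxtens_index (i', a)) (mxtens_index (l, b)))).
  rewrite exchange_big /=; apply: eq_bigr => b _; apply: eq_bigr => l _.
  rewrite !mxE sum_tens; congr (_ * _); apply: eq_bigr => j _.
  under eq_bigr do rewrite tensmxE [1%:M _ _]mxE mulrA.
  by rewrite sum_delta.
apply: eq_bigr => b _; rewrite !mxE; apply: eq_bigr => l _; rewrite !mxE.
by congr (_ * _); apply: eq_bigr => j _; rewrite !mxE.
Qed.

End Helpers2.
Set Implicit Arguments. Unset Strict Implicit.

Section H3.
Variable R : realType.
Local Notation C := (R[i]).

Lemma indep3 n (v w : 'M[C]_n) (a b c : C) :
  free [:: (1%:M : 'M[C]_n); v; w] ->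
  a *: 1%:M + b *: v + c *: w = 0 -> [/\ a = 0, b = 0 & c = 0].
Proof.
move=> hf E.
have /freeP H := (hf : free (in_tuple [:: (1%:M : 'M[C]_n); v; w])).
have H' := H (fun i : 'I_3 => [:: a; b; c]`_i).
have S : \sum_(i < 3) [:: a; b; c]`_i *: (in_tuple [:: (1%:M : 'M[C]_n); v; w])`_i = 0.
  by rewrite !big_ord_recr big_ord0 /= add0r.
by split; [exact: (H' S 0) | exact: (H' S 1) | exact: (H' S 2)].
Qed.

End H3.

From mathcomp.algebra_tactics Require Import ring.

Lemma tr_pid (F : fieldType) k r : (r <= k)%N -> \tr (pid_mx r : 'M[F]_k) = r%:R.
Proof.
move=> rk; rewrite /mxtrace.
under eq_bigr do rewrite mxE eqxx andTb.
transitivity (\sum_(i < k | (i < r)%N) (1 : F)).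
  by rewrite [RHS]big_mkcond; apply: eq_bigr => i _; case: (i < r)%N.
by rewrite -(big_ord_widen _ (fun _ => 1) rk) sumr_const card_ord.
Qed.
Lemma trace_idem (F : fieldType) k (P : 'M[F]_k) : P *m P = P -> \tr P = (\rank P)%:R.
Proof.
move=> PP.
have uL := col_ebase_unit P; have uR := row_ebase_unit P.
set L := col_ebase P in uL *; set Rr := row_ebase P in uR *; set r := \rank P.
have dP : P = L *m pid_mx r *m Rr by rewrite mulmx_ebase.
have E : pid_mx r *m Rr *m L *m pid_mx r = pid_mx r :> 'M_k.
  have : L *m (pid_mx r *m Rr *m L *m pid_mx r) *m Rr = L *m pid_mx r *m Rr.
    by rewrite -dP -[RHS]PP [in RHS]dP !mulmxA.
  by move/(canRL (mulmxK uR))/(canRL (mulKmx uL)) => ->; rewrite mulmxK // mulKmx.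
have rk := rank_leq_row P.
rewrite dP -mulmxA mxtrace_mulC.
rewrite -[X in \tr (X *m _ *m _)](@pid_mx_id _ k k k r) //.
rewrite -!mulmxA mxtrace_mulC !mulmxA E tr_pid //.
Qed.

Lemma ac1 (V : zmodType) (a b c d e : V) : a + d - e + b + c = (a + b) + (c + d) - e.
Proof.
rewrite (addrC c d) addrA (addrAC a b d) (addrAC (a + d) (- e) b).
by rewrite (addrAC (a + d + b) (- e) c).
Qed.

Lemma rc_nat (R : realType) m : ((m%:R : R)%:C)%C = m%:R :> R[i].
Proof. exact: rmorph_nat. Qed.
Lemma rcM (R : realType) (x y : R) : ((x * y)%:C)%C = (x%:C)%C * (y%:C)%C :> R[i].
Proof. exact: rmorphM. Qed.
Lemma rcV (R : realType) (x : R) : ((x^-1)%:C)%C = ((x%:C)%C)^-1 :> R[i].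
Proof. exact: fmorphV. Qed.

Section Hard.
Variable R : realType.
Local Notation C := (R[i]).

Lemma indep_tens n k (v w : 'M[C]_n) (M0 M1 M2 : 'M[C]_k) :
  free [:: (1%:M : 'M[C]_n); v; w] ->
  (1%:M *t M0) + (v *t M1) + (w *t M2) = 0 -> [/\ M0 = 0, M1 = 0 & M2 = 0].
Proof.
move=> hf E.
suff H : forall a b, [/\ M0 a b = 0, M1 a b = 0 & M2 a b = 0].
  by split; apply/matrixP => a b; rewrite mxE; case: (H a b).
move=> a b; apply: indep3 hf _; apply/matrixP => i j.
have := congr1 (fun X : 'M[C]_(n * k) => X (mxtens_index (i, a)) (mxtens_index (j, b))) E.
rewrite /= !mxE !mxtens_indexK /= => <-.
by rewrite ![_ * M0 a b]mulrC ![_ * M1 a b]mulrC ![_ * M2 a b]mulrC.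
Qed.

Lemma hard n k (u1 u2 : 'M[C]_n) (t : R) (U : 'M[C]_(n * k)) :
  (0 < n)%N -> (0 < k)%N -> unitary_mx u1 -> unitary_mx u2 ->
  free [:: (1%:M : 'M[C]_n); adjmx u1 *m u2; adjmx u2 *m u1] ->
  unitary_mx U ->
  (forall x, (t%:C)%C *: (u1 *m x *m adjmx u1) + ((1 - t)%:C)%C *: (u2 *m x *m adjmx u2)
     = ptrace_norm k (U *m (x *t (1%:M : 'M[C]_k)) *m adjmx U)) ->
  exists m : nat, t = m%:R / k%:R.
Proof.
move=> n0 k0 [u1u u1u'] [u2u u2u'] hf [UU UU'] hPhi.
pose K := Kab U.
have Qid : forall Y, (t%:C)%C * (ip Y u1 * conjc (ip Y u1)) + ((1 - t)%:C)%C * (ip Y u2 * conjc (ip Y u2))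
   = k%:R^-1 * \sum_a \sum_b (ip Y (K a b) * conjc (ip Y (K a b))).
  move=> Y; have := Qf_ext Y hPhi; rewrite QfD !QfZ !QfL => ->.
  rewrite (Qf_ext Y (ptrace_conj U)) QfZ Qf_sum; congr (_ * _).
  by apply: eq_bigr => a _; rewrite Qf_sum; apply: eq_bigr => b _; rewrite QfL.
have ip11 : ip u1 u1 = n%:R by rewrite /ip u1u' mxtrace1.
have ip22 : ip u2 u2 = n%:R by rewrite /ip u2u' mxtrace1.
pose c := ip u1 u2.
have ip21 : ip u2 u1 = conjc c by rewrite ipC.
pose D : C := n%:R ^+ 2 - c * conjc c.
have n0' : (n%:R : C) != 0 by rewrite pnatr_eq0 -lt0n.
have hD : D != 0.
  apply/negP => /eqP D0.
  pose Z := n%:R *: u2 - c *: u1.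
  have : ip Z Z = 0.
    rewrite /Z !(ipBl, ipBr, ipZl, ipZr) ip11 ip22 ip21 -/c cj_nat.
    transitivity (n%:R * D); last by rewrite D0 mulr0.
    rewrite /D; ring.
  move/ip_eq0/eqP; rewrite subr_eq0 => /eqP E.
  have E2 : u2 = (c / n%:R) *: u1 by rewrite mulrC -scalerA -E scalerA mulVf // scale1r.
  have := @indep3 _ _ _ _ (c / n%:R) (-1) 0 hf.
  rewrite E2 -scalemxAr u1u' scale0r addr0 scaleN1r scalemx1 subrr => /(_ erefl) [_ H _].
  by move: H; apply/eqP; rewrite oppr_eq0 oner_eq0.
pose Y1 := conjc D^-1 *: (n%:R *: u1 - conjc c *: u2).
pose Y2 := conjc D^-1 *: (n%:R *: u2 - c *: u1).
have hY1 : forall X, ip Y1 X = D^-1 * (n%:R * ip u1 X - c * ip u2 X).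
  by move=> X; rewrite /Y1 ipZl conjcK ipBl !ipZl cj_nat conjcK.
have hY2 : forall X, ip Y2 X = D^-1 * (n%:R * ip u2 X - conjc c * ip u1 X).
  by move=> X; rewrite /Y2 ipZl conjcK ipBl !ipZl cj_nat.
have kinv0 : (k%:R : C)^-1 != 0 by rewrite invr_eq0 pnatr_eq0 -lt0n.
have Dec : forall a b, K a b = ip Y1 (K a b) *: u1 + ip Y2 (K a b) *: u2.
  move=> a b.
  pose Z := K a b - (ip Y1 (K a b) *: u1 + ip Y2 (K a b) *: u2).
  have h1 : ip u1 Z = 0.
    rewrite /Z ipBr ipDr !ipZr hY1 hY2 ip11 -/c.
    rewrite /D in hD *; field; exact: hD.
  have h2 : ip u2 Z = 0.
    rewrite /Z ipBr ipDr !ipZr hY1 hY2 ip22 ip21 -/c.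
    rewrite /D in hD *; field; exact: hD.
  have eK : K a b = Z + (ip Y1 (K a b) *: u1 + ip Y2 (K a b) *: u2) by rewrite subrK.
  clearbody Z.
  have := Qid Z.
  rewrite (ipC u1 Z) (ipC u2 Z) h1 h2 cj0 !mul0r !mulr0 addr0 => /esym /eqP.
  rewrite mulf_eq0 (negbTE kinv0) /= => /eqP S.
  have nn : forall Y (X : 'M[C]_n), 0 <= ip Y X * conjc (ip Y X) by move=> Y X; apply: mulcJ_ge0.
  have S1 : \sum_b ip Z (K a b) * conjc (ip Z (K a b)) = 0.
    by apply: (psumr_eq0P _ S) => // a' _; apply: sumr_ge0 => b' _; exact: nn.
  have S2 : ip Z (K a b) * conjc (ip Z (K a b)) = 0.
    by apply: (psumr_eq0P _ S1) => // b' _; exact: nn.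
  have : ip Z (K a b) = 0 by move/eqP: S2; rewrite mulf_eq0 conjc_eq0 orbb => /eqP.
  have -> : ip Z (K a b) = ip Z Z.
    rewrite {1}eK.
    by rewrite ipDr ipDr !ipZr (ipC u1 Z) (ipC u2 Z) h1 h2 cj0 !mulr0 !addr0.
  by move/ip_eq0 => Z0; rewrite {1}eK Z0 add0r.
have hsum : \sum_a \sum_b ip Y1 (K a b) * conjc (ip Y1 (K a b)) = k%:R * (t%:C)%C.
  have y11 : ip Y1 u1 = 1 by rewrite hY1 ip11 -/c ip21; rewrite /D in hD *; field.
  have y12 : ip Y1 u2 = 0 by rewrite hY1 ip22 -/c; ring.
  have := Qid Y1; rewrite y11 y12 cj1 cj0 !mulr1 !mulr0 addr0 => ->.
  by rewrite mulrA divff ?mul1r // pnatr_eq0 -lt0n.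
pose A : 'M[C]_k := \matrix_(a, b) ip Y1 (K a b).
pose B : 'M[C]_k := \matrix_(a, b) ip Y2 (K a b).
have hU : U = u1 *t A + u2 *t B.
  apply/matrixP => p q; case: (mxtens_indexP p) => i a; case: (mxtens_indexP q) => j b.
  rewrite !mxE !mxtens_indexK /=.
  transitivity (K a b i j); first by rewrite /K /Kab mxE.
  by rewrite {1}(Dec a b) !mxE mulrC [u2 i j * _]mulrC.
have hsumA : \sum_a \sum_b A a b * conjc (A a b) = k%:R * (t%:C)%C.
  by rewrite -hsum; apply: eq_bigr => a _; apply: eq_bigr => b _; rewrite mxE.
clearbody A B; clear hsum Dec Qid hPhi.
rewrite hU in UU UU'; clear hU.
have E1 : 1%:M *t (adjmx A *m A + adjmx B *m B - 1%:M) + (adjmx u1 *m u2) *t (adjmx A *m B)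
          + (adjmx u2 *m u1) *t (adjmx B *m A) = 0.
  have : adjmx (u1 *t A + u2 *t B) *m (u1 *t A + u2 *t B) - 1%:M = 0 by rewrite UU' subrr.
  rewrite adjmxD !adjmx_tens mulmxDl !mulmxDr !tensmx_mul u1u' u2u' -tens11 => <-.
  by rewrite !tensmxDr tensmxNr ac1.
have E2 : 1%:M *t (A *m adjmx A + B *m adjmx B - 1%:M) + (u1 *m adjmx u2) *t (A *m adjmx B)
          + (u2 *m adjmx u1) *t (B *m adjmx A) = 0.
  have : (u1 *t A + u2 *t B) *m adjmx (u1 *t A + u2 *t B) - 1%:M = 0 by rewrite UU subrr.
  rewrite adjmxD !adjmx_tens mulmxDl !mulmxDr !tensmx_mul u1u u2u -tens11 => <-.
  by rewrite !tensmxDr tensmxNr ac1.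
have cjT : forall (X : 'M[C]_n) (M : 'M[C]_k),
    (adjmx u1 *t 1%:M) *m (X *t M) *m (u1 *t 1%:M) = (adjmx u1 *m X *m u1) *t M.
  by move=> X M; rewrite !tensmx_mul mul1mx mulmx1.
have E3 := congr1 (fun X => (adjmx u1 *t 1%:M) *m X *m (u1 *t (1%:M : 'M[C]_k))) E2.
move: E3; rewrite /= mulmx0 mul0mx !mulmxDr !mulmxDl !cjT.
have c1 : adjmx u1 *m 1%:M *m u1 = 1%:M by rewrite mulmx1 u1u'.
have c2 : adjmx u1 *m (u1 *m adjmx u2) *m u1 = adjmx u2 *m u1 by rewrite mulmxA u1u' mul1mx.
have c3 : adjmx u1 *m (u2 *m adjmx u1) *m u1 = adjmx u1 *m u2.
  by rewrite !mulmxA -(mulmxA _ _ u1) u1u' mulmx1.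
rewrite c1 c2 c3 addrAC => /(indep_tens hf) [_ _ AB0].
case: (indep_tens hf E1) => /eqP; rewrite subr_eq0 => /eqP PA _ _.
have PA' : adjmx A *m A = 1%:M - adjmx B *m B by rewrite -PA addrK.
pose P := adjmx A *m A.
have PP : P *m P = P.
  rewrite {2}/P PA' mulmxBr mulmx1 /P -!mulmxA (mulmxA A (adjmx B)) AB0 mul0mx mulmx0.
  by rewrite subr0.
have trP : \tr P = k%:R * (t%:C)%C.
  rewrite -hsumA /P -/(ip A A) ipE; apply: eq_bigr => a _; apply: eq_bigr => b _.
  by rewrite mulrC.
exists (\rank P); apply: complexI.
rewrite rcM rcV !rc_nat -(trace_idem PP) trP mulrC mulrA mulVf ?mul1r //.
by rewrite pnatr_eq0 -lt0n.
Qed.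

End Hard.
Set Implicit Arguments. Unset Strict Implicit.

Section Easy.
Variable R : realType.
Local Notation C := (R[i]).

Lemma rcB (x y : R) : ((x - y)%:C)%C = (x%:C)%C - (y%:C)%C :> C.
Proof. exact: rmorphB. Qed.
Lemma rc1 : ((1 : R)%:C)%C = 1 :> C.
Proof. exact: rmorph1. Qed.

Lemma ptraceD n k (X Y : 'M[C]_(n * k)) :
  ptrace_norm k (X + Y) = ptrace_norm k X + ptrace_norm k Y.
Proof. by apply/matrixP => i j; rewrite !mxE -mulrDr -big_split; congr (_ * _); apply: eq_bigr => a _; rewrite mxE. Qed.

Lemma ptrace_tens n k (X : 'M[C]_n) (M : 'M[C]_k) :
  ptrace_norm k (X *t M) = (k%:R^-1 * \tr M) *: X.
Proof.
apply/matrixP => i j; rewrite !mxE -mulrA; congr (_ * _).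
rewrite /mxtrace big_distrl /=; apply: eq_bigr => a _; rewrite tensmxE mulrC.
by [].
Qed.

Lemma adj_pid k r : adjmx (pid_mx r : 'M[C]_k) = pid_mx r.
Proof.
rewrite /adjmx (_ : map_mx (@conjc R) (pid_mx r) = pid_mx r) ?tr_pid_mx //.
by apply/matrixP => i j; rewrite !mxE cj_nat.
Qed.

Lemma adj_copid k r : adjmx (copid_mx r : 'M[C]_k) = copid_mx r.
Proof. by rewrite /copid_mx adjmxB adjmx1 adj_pid. Qed.

Lemma easy n k (u1 u2 : 'M[C]_n) (t : R) (r : nat) :
  unitary_mx u1 -> unitary_mx u2 -> (0 < k)%N -> (r <= k)%N -> t = r%:R / k%:R ->
  k_noisy k (fun x : 'M[C]_n =>
        (t%:C)%C *: (u1 *m x *m adjmx u1) + ((1 - t)%:C)%C *: (u2 *m x *m adjmx u2)).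
Proof.
move=> [u1u u1u'] [u2u u2u'] k0 rk ht.
pose P : 'M[C]_k := pid_mx r; pose Q : 'M[C]_k := copid_mx r.
have PP : P *m P = P by rewrite pid_mx_id.
have QQ : Q *m Q = Q by rewrite copid_mx_id.
have PQ : P *m Q = 0 by rewrite mul_pid_mx_copid.
have QP : Q *m P = 0 by rewrite mul_copid_mx_pid.
have PQ1 : P + Q = 1%:M by rewrite /Q /copid_mx addrC subrK.
exists (u1 *t P + u2 *t Q).
have aU : adjmx (u1 *t P + u2 *t Q) = adjmx u1 *t P + adjmx u2 *t Q.
  by rewrite adjmxD !adjmx_tens adj_pid adj_copid.
split.
  rewrite /unitary_mx aU; split.
    rewrite mulmxDl !mulmxDr !tensmx_mul u1u u2u PP QQ PQ QP !tensmx0 addr0 add0r.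
    by rewrite -tensmxDr PQ1 tens11.
  rewrite mulmxDl !mulmxDr !tensmx_mul u1u' u2u' PP QQ PQ QP !tensmx0 addr0 add0r.
  by rewrite -tensmxDr PQ1 tens11.
move=> x; rewrite aU mulmxDl !tensmx_mul !mulmx1 mulmxDl !mulmxDr !tensmx_mul.
rewrite PP QQ PQ QP !tensmx0 addr0 add0r ptraceD !ptrace_tens.
have k0' : (k%:R : C) != 0 by rewrite pnatr_eq0 -lt0n.
congr (_ *: _ + _ *: _).
  by rewrite tr_pid // ht rcM rcV !rc_nat mulrC.
have t1 : \tr (1%:M : 'M[C]_k) = k%:R by exact: mxtrace1.
have trB : forall A B : 'M[C]_k, \tr (A - B) = \tr A - \tr B by move=> A B; exact: raddfB.
rewrite /Q /copid_mx trB t1 tr_pid // ht.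
rewrite (_ : ((1 - r%:R / k%:R)%:C)%C = 1 - (r%:R / k%:R : C)); last first.
  by rewrite rcB rc1 rcM rcV !rc_nat.
by rewrite mulrBr mulVf // mulrC.
Qed.

End Easy.

Unset Implicit Arguments. Set Strict Implicit.


Theorem mainTheorem3 (R : realType) (n : nat) (u1 u2 : 'M[R[i]]_n) (t : R) :
  (3 <= n)%N ->
  unitary_mx u1 -> unitary_mx u2 ->
  free [:: (1%:M : 'M[R[i]]_n); adjmx u1 *m u2; adjmx u2 *m u1] ->
  0 < t < 1 ->
  forall k : nat, (2 <= k)%N ->
    (k_noisy k (fun x : 'M[R[i]]_n =>
        (t%:C)%C *: (u1 *m x *m adjmx u1) + ((1 - t)%:C)%C *: (u2 *m x *m adjmx u2))
     <-> exists m : int, t = m%:~R / k%:R).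
Proof.
move=> n3 hu1 hu2 hf /andP[t0 t1] k k2.
have n0 : (0 < n)%N by apply: leq_trans n3.
have k0 : (0 < k)%N by apply: leq_trans k2.
have kR : (0 : R) < k%:R by rewrite ltr0n.
split.
  move=> [U [hU hPhi]].
  have [m hm] := hard n0 k0 hu1 hu2 hf hU hPhi.
  by exists m.
move=> [m hm].
have hmk : (m%:~R : R) = t * k%:R by rewrite hm mulfVK // gt_eqF.
have mpos : (0 < m)%R by rewrite -(ltr0z R) hmk mulr_gt0.
case: m hm hmk mpos => [r|r] hm hmk mpos; last by [].
have hr : (r%:R : R) = t * k%:R by exact: hmk.
apply: (easy (r:=r)) => //.
  have : (r%:R : R) < k%:R by rewrite hr gtr_pMl.
  by rewrite ltr_nat => /ltnW.
Qed.
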